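(* Let $K=\{K_X\}_{X\subset\Lambda_L}$ be an even interaction on $\Lambda_L$ and $K_{\Lambda_L}=\sum_{X\subset\Lambda_L}K_X$. Then, for every $\kappa\ge0$, \[ \bigl\|[K_{\Lambda_L},\bar q_{\Lambda_L}]\bigr\|\le2\|K\|_0\le2\|K\|_\kappa . \]
   Context: $\Lambda_L=(\mathbb Z/L\mathbb Z)^d$, $L\in2\mathbb N$; fermionic Fock space over $\ell^2(\Lambda_L)\otimes\mathbb C^2$ with CAR operators $c_{x\sigma}$, $n_{x\sigma}=c^*_{x\sigma}c_{x\sigma}$, $n_x=n_{x\uparrow}+n_{x\downarrow}$, $q_x=(n_x-1)^2$, $\bar q_{\Lambda_L}=|\Lambda_L|^{-1}\sum_{x\in\Lambda_L}q_x$. An even interaction is $K=\{K_X\}$ with $K_X$ a parity-even (invariant under $c_{x\sigma}\mapsto-c_{x\sigma}$) element of the CAR algebra generated by $c_{x\sigma},c^*_{x\sigma}$, $x\in X$. $\|K\|_\kappa=\sup_x\sum_{X\ni x}e^{\kappa|X|}\|K_X\|$ (operator norm), $\|K\|_0$ the case $\kappa=0$. *)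

(* Defs.v *)
From HB Require Import structures.
From mathcomp Require Import all_boot all_order all_algebra.
From mathcomp Require Import all_classical all_reals.
From mathcomp Require Import all_analysis.
From mathcomp.real_closed Require Import complex.
Set Implicit Arguments. Unset Strict Implicit. Unset Printing Implicit Defensive.
Import Order.TTheory GRing.Theory Num.Theory.
Import ComplexField.
Local Open Scope ring_scope.

Section Fock.
Variable R : realType.
Local Notation C := R[i].

Definition cabs (z : C) : R := Normc.normc z.

(* lattice Lambda_L = (Z/LZ)^d, as a finite set of sites *)
Definition site (d L : nat) := {ffun 'I_d -> 'I_L}.
(* single-particle modes: site x spin (true = up, false = down) *)
Definition mode (d L : nat) := (site d L * bool)%type.

Variables d L : nat.
Local Notation M := (mode d L).

(* Fock basis: occupation sets S ⊆ modes; vectors and operators *)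
Definition vec := {set M} -> C.
Definition op := {set M} -> {set M} -> C.   (* matrix kernel A S T = <S|A|T> *)

Definition op_apply (A : op) (v : vec) : vec := fun S => \sum_T A S T * v T.
Definition op_mul (A B : op) : op := fun S T => \sum_U A S U * B U T.
Definition op_add (A B : op) : op := fun S T => A S T + B S T.
Definition op_scale (a : C) (A : op) : op := fun S T => a * A S T.
Definition op_zero : op := fun _ _ => 0.
Definition op_one : op := fun S T => (S == T)%:R.
Definition op_adj (A : op) : op := fun S T => (A T S)^*.
Definition op_sum (I : finType) (P : pred I) (F : I -> op) : op :=
  fun S T => \sum_(i | P i) F i S T.
Definition comm (A B : op) : op := op_add (op_mul A B) (op_scale (-1) (op_mul B A)).

Definition vnorm (v : vec) : R := Num.sqrt (\sum_S cabs (v S) ^+ 2).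
Definition opnorm (A : op) : R :=
  sup [set r : R | exists v : vec, vnorm v <= 1 /\ r = vnorm (op_apply A v)].

(* Jordan-Wigner realisation of the CAR: annihilation operator c_m *)
Definition jw_sign (m : M) (S : {set M}) : C :=
  (-1) ^+ #|[set m' in S | (enum_rank m' < enum_rank m)%N]|.
Definition cop (m : M) : op :=
  fun S T => ((m \in T) && (S == T :\ m))%:R * jw_sign m T.
Definition cdag (m : M) : op := op_adj (cop m).

Definition nop (x : site d L) (s : bool) : op := op_mul (cdag (x, s)) (cop (x, s)).
Definition nx (x : site d L) : op := op_add (nop x true) (nop x false).
Definition qx (x : site d L) : op :=
  let A := op_add (nx x) (op_scale (-1) op_one) in op_mul A A.
Definition qbar : op :=
  op_scale (#|site d L|%:R)^-1 (op_sum predT qx).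

Inductive in_alg (X : {set site d L}) : op -> Prop :=
| alg_c x s : x \in X -> in_alg X (cop (x, s))
| alg_cdag x s : x \in X -> in_alg X (cdag (x, s))
| alg_one : in_alg X op_one
| alg_add A B : in_alg X A -> in_alg X B -> in_alg X (op_add A B)
| alg_scale a A : in_alg X A -> in_alg X (op_scale a A)
| alg_mul A B : in_alg X A -> in_alg X B -> in_alg X (op_mul A B).

(* parity automorphism theta (c_m |-> -c_m), implemented as Ad(P) with
   P = (-1)^{total number operator} *)
Definition parity : op := fun S T => (S == T)%:R * (-1) ^+ #|S|.
Definition theta (A : op) : op := op_mul parity (op_mul A parity).
Definition even_op (A : op) : Prop := theta A = A.

Definition interaction := {set site d L} -> op.
Definition even_interaction (K : interaction) : Prop :=
  forall X, in_alg X (K X) /\ even_op (K X).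

Definition K_total (K : interaction) : op := op_sum predT K.

Definition int_norm (kappa : R) (K : interaction) : R :=
  \big[Num.max/0]_(x : site d L)
     \sum_(X : {set site d L} | x \in X) expR (kappa * #|X|%:R) * opnorm (K X).

End Fock.

(* Main.v *)
Require Import Defs.
From HB Require Import structures.
From mathcomp Require Import all_boot all_order all_algebra.
From mathcomp Require Import all_classical all_reals.
From mathcomp.real_closed Require Import complex.
From mathcomp Require Import all_analysis.
From mathcomp Require Import ring lra.
Import Order.TTheory GRing.Theory Num.Theory.
Import ComplexField.
Local Open Scope ring_scope.


Section Real.
Variable R : realType.
Variable I : finType.

Lemma lagrange (a b : I -> R) :
  (\sum_i a i * b i) ^+ 2 <= (\sum_i a i ^+ 2) * (\sum_i b i ^+ 2).
Proof.
have H : (\sum_i \sum_j (a i * b j - a j * b i) ^+ 2)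
   + 2 * (\sum_i \sum_j (a i * b i) * (a j * b j))
   = (\sum_i \sum_j a i ^+ 2 * b j ^+ 2) + (\sum_i \sum_j a j ^+ 2 * b i ^+ 2).
  rewrite mulr_sumr -!big_split /=; apply: eq_bigr => i _.
  rewrite mulr_sumr -!big_split /=; apply: eq_bigr => j _; ring.
have E1 : (\sum_i \sum_j a i ^+ 2 * b j ^+ 2) = (\sum_i a i ^+ 2) * (\sum_i b i ^+ 2).
  by rewrite mulr_suml; apply: eq_bigr => i _; rewrite mulr_sumr.
have E2 : (\sum_i \sum_j a j ^+ 2 * b i ^+ 2) = (\sum_i a i ^+ 2) * (\sum_i b i ^+ 2).
  by rewrite exchange_big.
have E3 : (\sum_i \sum_j (a i * b i) * (a j * b j)) = (\sum_i a i * b i) ^+ 2.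
  by rewrite expr2 mulr_suml; apply: eq_bigr => i _; rewrite mulr_sumr.
rewrite E1 E2 E3 in H.
have P : 0 <= \sum_i \sum_j (a i * b j - a j * b i) ^+ 2.
  by apply: sumr_ge0 => i _; apply: sumr_ge0 => j _; apply: sqr_ge0.
move: H P.
move: (\sum_i \sum_j (a i * b j - a j * b i) ^+ 2) => q.
move: ((\sum_i a i * b i) ^+ 2) => s.
move: ((\sum_i a i ^+ 2) * (\sum_i b i ^+ 2)) => p. lra.
Qed.

Lemma cs (a b : I -> R) : (forall i, 0 <= a i) -> (forall i, 0 <= b i) ->
  \sum_i a i * b i <= Num.sqrt (\sum_i a i ^+ 2) * Num.sqrt (\sum_i b i ^+ 2).
Proof.
move=> a0 b0.
have s0 : 0 <= \sum_i a i * b i by apply: sumr_ge0 => i _; apply: mulr_ge0.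
rewrite -sqrtrM; last by apply: sumr_ge0 => i _; apply: sqr_ge0.
rewrite -(ger0_norm s0) -sqrtr_sqr ler_wsqrtr //; exact: lagrange.
Qed.

Lemma minkowski (a b : I -> R) : (forall i, 0 <= a i) -> (forall i, 0 <= b i) ->
  Num.sqrt (\sum_i (a i + b i) ^+ 2) <= Num.sqrt (\sum_i a i ^+ 2) + Num.sqrt (\sum_i b i ^+ 2).
Proof.
move=> a0 b0.
have A0 : 0 <= \sum_i a i ^+ 2 by apply: sumr_ge0 => i _; apply: sqr_ge0.
have B0 : 0 <= \sum_i b i ^+ 2 by apply: sumr_ge0 => i _; apply: sqr_ge0.
set A := Num.sqrt (\sum_i a i ^+ 2).
set B := Num.sqrt (\sum_i b i ^+ 2).
have AB0 : 0 <= A + B by rewrite addr_ge0 // sqrtr_ge0.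
rewrite -(ger0_norm AB0) -sqrtr_sqr ler_wsqrtr //.
have -> : \sum_i (a i + b i) ^+ 2 = \sum_i a i ^+ 2 + \sum_i b i ^+ 2 + 2 * \sum_i a i * b i.
  rewrite mulr_sumr -!big_split /=; apply: eq_bigr => i _; ring.
have := cs _ _ a0 b0;  rewrite -/A -/B => h.
have -> : (A + B) ^+ 2 = A ^+ 2 + B ^+ 2 + 2 * (A * B) by ring.
rewrite /A /B !sqr_sqrtr //; rewrite /A /B in h. lra.
Qed.
End Real.


Section Vec.
Variable R : realType.
Variables d L : nat.
Local Notation C := R[i].
Local Notation vec := (vec R d L).
Local Notation vnorm := (@vnorm R d L).
Local Notation cabs := (@cabs R).

Lemma cabs_ge0 z : 0 <= cabs z.
Proof. by case: z => a b; rewrite /cabs /=; apply: sqrtr_ge0. Qed.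
Lemma cabsD x y : cabs (x + y) <= cabs x + cabs y.
Proof. exact: le_normcD. Qed.
Lemma cabsM x y : cabs (x * y) = cabs x * cabs y.
Proof. exact: Normc.normcM. Qed.
Lemma cabsN x : cabs (- x) = cabs x.
Proof. exact: normcN. Qed.
Lemma cabs0 : cabs 0 = 0.
Proof. exact: Normc.normc0. Qed.
Lemma cabs1 : cabs 1 = 1.
Proof. exact: Normc.normc1. Qed.
Lemma cabsR r : cabs (r%:C%C) = `|r|.
Proof. by rewrite /cabs /= expr0n /= addr0 sqrtr_sqr. Qed.

Lemma vnorm_ge0 v : 0 <= vnorm v.
Proof. exact: sqrtr_ge0. Qed.

Lemma vnorm_le (u w : vec) : (forall S, cabs (u S) <= cabs (w S)) -> vnorm u <= vnorm w.
Proof.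
move=> h; apply: ler_wsqrtr; apply: ler_sum => S _.
by rewrite !expr2; apply: ler_pM; rewrite ?cabs_ge0 ?h.
Qed.

Lemma vnorm_add (u w : vec) : vnorm (fun S => u S + w S) <= vnorm u + vnorm w.
Proof.
apply: le_trans (@minkowski R _ _ _ (fun S => cabs_ge0 (u S)) (fun S => cabs_ge0 (w S))).
apply: ler_wsqrtr; apply: ler_sum => S _.
rewrite !expr2; apply: ler_pM; rewrite ?cabs_ge0 ?cabsD //.
Qed.

Lemma vnorm_scale (c : C) (u : vec) : vnorm (fun S => c * u S) = cabs c * vnorm u.
Proof.
rewrite /Defs.vnorm.
have -> : \sum_S cabs (c * u S) ^+ 2 = cabs c ^+ 2 * \sum_S cabs (u S) ^+ 2.
  by rewrite mulr_sumr; apply: eq_bigr => S _; rewrite cabsM exprMn.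
by rewrite sqrtrM ?sqr_ge0 // sqrtr_sqr ger0_norm // cabs_ge0.
Qed.

Lemma vnorm_opp (u : vec) : vnorm (fun S => - u S) = vnorm u.
Proof. by rewrite /Defs.vnorm; congr Num.sqrt; apply: eq_bigr => S _; rewrite cabsN. Qed.

Lemma vnorm_sub (u w : vec) : vnorm (fun S => u S - w S) <= vnorm u + vnorm w.
Proof. by rewrite -(vnorm_opp w); apply: vnorm_add. Qed.

Lemma vnorm0 : vnorm (fun _ => 0) = 0.
Proof. by rewrite /Defs.vnorm big1 ?sqrtr0 // => S _; rewrite cabs0 expr0n. Qed.

Lemma vnorm_sum (J : Type) (r : seq J) (P : pred J) (F : J -> vec) :
  vnorm (fun S => \sum_(i <- r | P i) F i S) <= \sum_(i <- r | P i) vnorm (F i).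
Proof.
elim: r => [|i r IH].
  have -> : (fun S => \sum_(i <- [::] | P i) F i S) = (fun _ => 0).
    by apply: boolp.funext => S; rewrite big_nil.
  by rewrite vnorm0 big_nil.
have -> : (fun S => \sum_(j <- i :: r | P j) F j S) =
  (fun S => if P i then F i S + \sum_(j <- r | P j) F j S else \sum_(j <- r | P j) F j S).
  by apply: boolp.funext => S; rewrite big_cons.
rewrite big_cons; case: (P i) => //.
by apply: le_trans (vnorm_add _ _) _; rewrite lerD2l.
Qed.

Lemma vnorm_entry (v : vec) S : cabs (v S) <= vnorm v.
Proof.
rewrite -(ger0_norm (cabs_ge0 (v S))) -sqrtr_sqr; apply: ler_wsqrtr.
rewrite (bigD1 S) //= lerDl; apply: sumr_ge0 => T _; exact: sqr_ge0.
Qed.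

Lemma vnorm_diag (g : {set mode d L} -> C) (u : vec) : (forall S, cabs (g S) <= 1) ->
  vnorm (fun S => g S * u S) <= vnorm u.
Proof.
move=> h; apply: vnorm_le => S; rewrite cabsM.
by rewrite -[X in _ <= X]mul1r ler_wpM2r ?cabs_ge0.
Qed.

End Vec.


Section Op.
Variable R : realType.
Variables d L : nat.
Local Notation C := R[i].
Local Notation vec := (vec R d L).
Local Notation op := (op R d L).
Local Notation vnorm := (@vnorm R d L).
Local Notation cabs := (@cabs R).

Lemma opnorm_bnd (A : op) : exists B, forall v, vnorm v <= 1 ->
  vnorm (op_apply A v) <= B.
Proof.
exists (\sum_T vnorm (fun S => A S T)) => v v1.
rewrite /op_apply.
apply: le_trans (@vnorm_sum R d L _ _ _ (fun T S => A S T * v T)) _.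
apply: ler_sum => T _.
have -> : (fun S => A S T * v T) = (fun S => v T * A S T).
  by apply: boolp.funext => S; rewrite mulrC.
rewrite vnorm_scale -[X in _ <= X]mul1r ler_wpM2r ?vnorm_ge0 //.
exact: le_trans (@vnorm_entry R d L _ _) v1.
Qed.

Lemma opnorm_ub (A : op) v : vnorm v <= 1 -> vnorm (op_apply A v) <= opnorm A.
Proof.
move=> v1; apply: sup_upper_bound; last by exists v.
split.
  exists (vnorm (op_apply A (fun _ => 0))); exists (fun _ => 0); split => //.
  by rewrite vnorm0.
have [B hB] := opnorm_bnd A.
exists B => r [w [w1 ->]]; exact: hB.
Qed.

Lemma opnorm_le (A : op) c : (forall v, vnorm v <= 1 -> vnorm (op_apply A v) <= c) ->
  opnorm A <= c.
Proof.
move=> h; apply: ge_sup.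
  exists (vnorm (op_apply A (fun _ => 0))); exists (fun _ => 0); split => //.
  by rewrite vnorm0.
by move=> r [w [w1 ->]]; apply: h.
Qed.

Lemma opnorm_ge0 (A : op) : 0 <= opnorm A.
Proof.
apply: le_trans (@opnorm_ub A (fun _ => 0) _); first exact: vnorm_ge0.
by rewrite vnorm0.
Qed.
End Op.


Section Alg.
Variable R : realType.
Variables d L : nat.
Local Notation C := R[i].
Local Notation M := (mode d L).
Local Notation vec := (vec R d L).
Local Notation op := (op R d L).

Lemma sum_delta (F : {set M} -> C) U0 : \sum_U (U == U0)%:R * F U = F U0.
Proof.
rewrite (bigD1 U0) //= eqxx mul1r big1 ?addr0 // => U /negbTE ->; by rewrite mul0r.
Qed.
Lemma sum_delta' (F : {set M} -> C) U0 : \sum_U F U * (U0 == U)%:R = F U0.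
Proof.
rewrite (bigD1 U0) //= eqxx mulr1 big1 ?addr0 // => U; rewrite eq_sym => /negbTE ->; by rewrite mulr0.
Qed.

Definition diag (g : {set M} -> C) : op := fun S T => (S == T)%:R * g S.

Lemma mul_op_diag (A : op) g S T : op_mul A (diag g) S T = A S T * g T.
Proof.
rewrite /op_mul /diag.
rewrite (bigD1 T) //= eqxx mul1r big1 ?addr0 // => U /negbTE ->; by rewrite mul0r mulr0.
Qed.

Lemma mul_diag_op (A : op) g S T : op_mul (diag g) A S T = g S * A S T.
Proof.
rewrite /op_mul /diag.
rewrite (bigD1 S) //= eqxx mul1r big1 ?addr0 // => U; rewrite eq_sym => /negbTE ->; by rewrite !mul0r.
Qed.

Lemma apply_diag g (v : vec) S : op_apply (diag g) v S = g S * v S.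
Proof.
rewrite /op_apply /diag.
rewrite (bigD1 S) //= eqxx mul1r big1 ?addr0 // => U; rewrite eq_sym => /negbTE ->; by rewrite !mul0r.
Qed.

Lemma jw_conj (m : M) S : (jw_sign R m S)^* = jw_sign R m S.
Proof. by rewrite /jw_sign rmorphXn rmorphN1. Qed.

Lemma jw_sq (m : M) S : jw_sign R m S * jw_sign R m S = 1.
Proof. by rewrite /jw_sign -exprMn mulrNN mulr1 expr1n. Qed.

Lemma nop_diag x s : nop R x s = diag (fun S => ((x, s) \in S)%:R).
Proof.
apply: boolp.funext => S; apply: boolp.funext => T.
rewrite /nop /op_mul /cdag /op_adj /cop /diag.
case mS: ((x, s) \in S); last first.
  by rewrite mulr0 big1 // => U _; rewrite /= mul0r rmorph0 mul0r.
rewrite (bigD1 (S :\ (x, s))) //= eqxx mul1r big1 ?addr0; last first.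
  by move=> U /negbTE; rewrite eq_sym => ->; rewrite /= mul0r rmorph0 mul0r.
rewrite mulr1 jw_conj.
have [<-|nST] := eqVneq S T; first by rewrite mS eqxx /= mul1r jw_sq.
case mT: ((x, s) \in T) => /=; last by rewrite mul0r mulr0.
case: eqP => [E|_]; last by rewrite mul0r mulr0.
have mS' : (x, s) \in S by rewrite mS.
have mT' : (x, s) \in T by rewrite mT.
have : S = T by rewrite -(finset.setD1K mS') E finset.setD1K.
by move=> ST; rewrite ST eqxx in nST.
Qed.

Definition gq (x : site d L) (S : {set M}) : C :=
  (((x, true) \in S)%:R + ((x, false) \in S)%:R - 1) ^+ 2.

Lemma qx_diag x : qx R x = diag (gq x).
Proof.
apply: boolp.funext => S; apply: boolp.funext => T.
rewrite /qx /nx !nop_diag.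
set a := fun S : {set M} => ((x, true) \in S)%:R + ((x, false) \in S)%:R - 1 : C.
have -> : op_add (op_add (diag (fun S => ((x, true) \in S)%:R))
      (diag (fun S => ((x, false) \in S)%:R))) (op_scale (-1) (@op_one R d L)) = diag a.
  apply: boolp.funext => S'; apply: boolp.funext => T'.
  by rewrite /op_add /op_scale /op_one /diag /a; ring.
rewrite mul_op_diag /diag /gq -/(a S).
case: eqP => [->|_]; rewrite /= ?mul1r ?mul0r ?expr2 //.
Qed.

End Alg.


Section Supp.
Variable R : realType.
Variables d L : nat.
Local Notation C := R[i].
Local Notation M := (mode d L).
Local Notation op := (op R d L).

Definition supp (X : {set site d L}) (A : op) :=
  forall S T, A S T != 0 -> forall m : M, m.1 \notin X -> (m \in S) = (m \in T).

Lemma in_alg_supp (X : {set site d L}) (A : op) : Defs.in_alg X A -> supp X A.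
Proof.
elim => {A}.
- move=> x s xX S T; rewrite /cop.
  case: ((x, s) \in T) => /=; last by rewrite mul0r eqxx.
  case: (eqVneq S (T :\ (x, s))) => [-> _ m mX|_]; last by rewrite mul0r eqxx.
  rewrite in_setD1; case: eqP => // E; by move: mX; rewrite E /= xX.
- move=> x s xX S T; rewrite /cdag /op_adj /cop.
  case: ((x, s) \in S) => /=; last by rewrite mul0r rmorph0 eqxx.
  case: (eqVneq T (S :\ (x, s))) => [-> _ m mX|_]; last by rewrite mul0r rmorph0 eqxx.
  rewrite in_setD1; case: eqP => // E; by move: mX; rewrite E /= xX.
- by move=> S T; rewrite /op_one; case: (eqVneq S T) => [-> //|_]; rewrite /= mulr0n eqxx.
- move=> A B _ hA _ hB S T; rewrite /op_add.
  case: (eqVneq (A S T) 0) => [->|nA]; first by rewrite add0r => /hB.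
  by move=> _; apply: hA.
- move=> a A _ hA S T; rewrite /op_scale.
  case: (eqVneq (A S T) 0) => [->|nA]; first by rewrite mulr0 eqxx.
  by move=> _; apply: hA.
- move=> A B _ hA _ hB S T; rewrite /op_mul.
  case: (pickP (fun U => A S U * B U T != 0)) => [U hU | h]; last first.
    by rewrite big1 ?eqxx // => U _; move: (h U) => /negbFE/eqP.
  move=> _ m mX.
  have nA : A S U != 0 by apply: contraNneq hU => ->; rewrite mul0r.
  have nB : B U T != 0 by apply: contraNneq hU => ->; rewrite mulr0.
  by rewrite (hA _ _ nA m mX) (hB _ _ nB m mX).
Qed.

Lemma gq_supp X (A : op) x S T : supp X A -> x \notin X ->
  A S T * (@gq R d L x T - @gq R d L x S) = 0.
Proof.
move=> hA xX; case: (eqVneq (A S T) 0) => [->|nA]; first by rewrite mul0r.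
by rewrite /gq (hA _ _ nA (x, true)) // (hA _ _ nA (x, false)) // subrr mulr0.
Qed.

Lemma gq_le1 (x : site d L) S : cabs (@gq R d L x S) <= 1.
Proof.
rewrite /gq; case: ((x, true) \in S); case: ((x, false) \in S);
  rewrite ?mulr1n ?mulr0n ?addr0 ?add0r ?addrK ?subrr ?sqrrN ?expr1n ?expr2 ?mul0r ?cabs0 ?cabs1 //.
Qed.

End Supp.


Section Main.
Variable R : realType.
Variables d L : nat.
Local Notation C := R[i].
Local Notation M := (mode d L).
Local Notation op := (op R d L).
Local Notation vec := (vec R d L).
Local Notation vnorm := (@vnorm R d L).
Local Notation gq := (@gq R d L).

Definition cc : C := (#|site d L|%:R)^-1.
Definition gbar S : C := cc * \sum_x gq x S.

Lemma qbar_diag : qbar R (d:=d) (L:=L) = @diag R d L gbar.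
Proof.
apply: boolp.funext => S; apply: boolp.funext => T.
rewrite /qbar /op_scale /op_sum /diag /gbar -/cc.
under eq_bigr do rewrite qx_diag /diag.
by rewrite -mulr_sumr mulrCA.
Qed.

Lemma comm_entry (K : interaction R d L) (hK : forall X, @supp R d L X (K X)) S T :
  comm (K_total K) (qbar R (d:=d) (L:=L)) S T =
  \sum_(X : {set site d L}) \sum_(x in X) cc * (K X S T * (gq x T - gq x S)).
Proof.
rewrite /comm /op_add /op_scale qbar_diag mul_op_diag mul_diag_op /K_total /op_sum.
have -> : (\sum_X K X S T) * gbar T + -1 * (gbar S * \sum_X K X S T)
   = \sum_X \sum_x cc * (K X S T * (gq x T - gq x S)).
  transitivity ((\sum_X K X S T) * (gbar T - gbar S)); first by ring.
  rewrite mulr_suml; apply: eq_bigr => X _.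
  rewrite /gbar -mulrBr -sumrB !mulr_sumr; apply: eq_bigr => x _; ring.
apply: eq_bigr => X _.
rewrite [in RHS]big_mkcond /=; apply: eq_bigr => x _.
case: ifP => // /negbT xX.
by rewrite (@gq_supp R d L X (K X) x S T (hK X) xX) mulr0.
Qed.

Definition w (K : interaction R d L) (v : vec) (X : {set site d L}) (x : site d L) : vec :=
  fun S => op_apply (K X) (fun T => gq x T * v T) S - gq x S * op_apply (K X) v S.

Lemma apply_comm (K : interaction R d L) (hK : forall X, @supp R d L X (K X)) v S :
  op_apply (comm (K_total K) (qbar R (d:=d) (L:=L))) v S =
  \sum_(X : {set site d L}) \sum_(x in X) cc * w K v X x S.
Proof.
rewrite /op_apply.
under eq_bigr do rewrite (comm_entry _ hK) mulr_suml.
rewrite exchange_big /=; apply: eq_bigr => X _.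
under eq_bigr do rewrite mulr_suml.
rewrite exchange_big /=; apply: eq_bigr => x _.
rewrite /w /op_apply mulr_sumr -sumrB mulr_sumr.
by apply: eq_bigr => T _; ring.
Qed.

Lemma w_bound (K : interaction R d L) v X x : vnorm v <= 1 ->
  vnorm (w K v X x) <= 2 * opnorm (K X).
Proof.
move=> v1.
apply: le_trans (@vnorm_sub R d L _ _) _.
have h1 : vnorm (op_apply (K X) (fun T => gq x T * v T)) <= opnorm (K X).
  apply: opnorm_ub; apply: le_trans v1.
  by apply: vnorm_diag => S; apply: gq_le1.
have h2 : vnorm (fun S => gq x S * op_apply (K X) v S) <= opnorm (K X).
  apply: le_trans (@opnorm_ub R d L (K X) v v1).
  by apply: vnorm_diag => S; apply: gq_le1.
move: h1 h2; rewrite /w.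
move: (vnorm (op_apply (K X) (fun T => gq x T * v T))) => a.
move: (vnorm (fun S => gq x S * op_apply (K X) v S)) => b.
move: (opnorm (K X)) => o. lra.
Qed.

Lemma card_site_gt0 : (0 < L)%N -> (0 < #|site d L|)%N.
Proof. by move=> hL; rewrite /site card_ffun !card_ord expn_gt0 hL. Qed.

Lemma cabs_cc : (0 < L)%N -> cabs cc = (#|site d L|%:R)^-1.
Proof.
move=> hL; rewrite /cc /cabs Normc.normcV -/(cabs _).
by rewrite -(rmorph_nat (real_complex R)) cabsR ger0_norm.
Qed.

End Main.


Theorem lemmaA5 (R : realType) (d L : nat) (hL : (0 < L)%N) (hLev : ~~ odd L)
  (K : interaction R d L) (hK : even_interaction K) (kappa : R) (hk : 0 <= kappa) :
  opnorm (comm (K_total K) (@qbar R d L)) <= 2 * int_norm 0 K /\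
  2 * int_norm 0 K <= 2 * int_norm kappa K.
Proof.
have hS : forall X, @supp R d L X (K X) by move=> X; apply: in_alg_supp; case: (hK X).
have N0E : int_norm 0 K = \big[Num.max/0]_(x : site d L)
     \sum_(X : {set site d L} | x \in X) opnorm (K X).
  by rewrite /int_norm; apply: eq_bigr => x _; apply: eq_bigr => X _; rewrite mul0r expR0 mul1r.
have Nb : forall x, \sum_(X : {set site d L} | x \in X) opnorm (K X) <= int_norm 0 K.
  by move=> x; rewrite N0E (bigD1 x) //= le_max lexx.
split; last first.
  rewrite ler_pM2l ?ltr0n // N0E /int_norm.
  apply: (big_ind2 (fun a b => a <= b)) => //.
    by move=> a b c e h1 h2; apply: le_max2.
  move=> x _; apply: ler_sum => X _.
  apply: ler_peMl; first exact: opnorm_ge0.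
  apply: le_trans (expR_ge1Dx _); rewrite lerDl mulr_ge0 //.
set N := int_norm 0 K.
apply: opnorm_le => v v1.
have -> : op_apply (comm (K_total K) (@qbar R d L)) v =
   (fun S => \sum_(X : {set site d L}) \sum_(x in X) cc R d L * w R d L K v X x S).
  by apply: boolp.funext => S; apply: apply_comm.
apply: le_trans (@vnorm_sum R d L _ _ _ (fun (X : {set site d L}) S => \sum_(x in X) cc R d L * w R d L K v X x S)) _.
apply: (@le_trans _ _ (\sum_(X : {set site d L}) \sum_(x in X) cabs (cc R d L) * (2 * opnorm (K X)))).
  apply: ler_sum => X _.
  apply: le_trans (@vnorm_sum R d L _ _ (fun x => x \in X) (fun x S => cc R d L * w R d L K v X x S)) _.
  apply: ler_sum => x _.
  rewrite vnorm_scale; apply: ler_wpM2l; first exact: cabs_ge0.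
  exact: w_bound.
rewrite (exchange_big_dep predT) //=.
apply: (@le_trans _ _ (\sum_(x : site d L) cabs (cc R d L) * (2 * N))).
  apply: ler_sum => x _.
  rewrite -mulr_sumr; apply: ler_wpM2l; first exact: cabs_ge0.
  rewrite -mulr_sumr; apply: ler_wpM2l => //.
have n0 : (#|site d L|%:R : R) != 0 by rewrite pnatr_eq0 -lt0n card_site_gt0.
rewrite sumr_const cabs_cc // (_ : #|_| = #|site d L|); last by apply: eq_card.
by rewrite -mulrnAl -[(_^-1 *+ _)]mulr_natr mulVf // mul1r.
Qed.
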